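(* If $a_j\neq0$ for $1\le j\le 4$, then $HC_F(\mathbf v,d)\cap(\hat\ell_1\cup\hat\ell_2\cup\hat\ell_3\cup\hat\ell_4)=\{\mathbf p_1,\mathbf p_2,\mathbf p_3,\mathbf p_4\}$, and these four points are singular points of $HC_F(\mathbf v,d)$.
   Context: On $\mathbb{C}P^4$ use homogeneous coordinates $[w_0,w_1,w_2,w_3,x_1]$. Let $Y$ be the surface $w_0w_3-w_1w_2=0$, $x_1^2+w_0w_3=0$. For parameters $[\mathbf v,d]=[v_{11},v_{12},v_{21},v_{22},d]\in\mathbb{C}P^4$ (complex, not all zero), $HC_F(\mathbf v,d)$ is the set of points of $Y$ satisfying $A(\mathbf w)x_1+C(\mathbf w)=0$, where $A(\mathbf w)=2\big(v_{22}(w_3-w_0)-v_{12}(w_2-w_1)\big)$ and $C(\mathbf w)=a_1w_0w_1+a_2w_0w_2+a_3w_1w_3+a_4w_2w_3$, with $a_1=v_{11}-v_{21}-d$, $a_2=-v_{11}-v_{21}+d$, $a_3=v_{11}+v_{21}+d$, $a_4=-v_{11}+v_{21}-d$. The lines on $Y$ are $\hat\ell_1=\{[w_0,w_1,0,0,0]\}$, $\hat\ell_2=\{[w_0,0,w_2,0,0]\}$, $\hat\ell_3=\{[0,0,w_2,w_3,0]\}$, $\hat\ell_4=\{[0,w_1,0,w_3,0]\}$. The points are $\mathbf p_1=[1,0,0,0,0]$, $\mathbf p_2=[0,0,0,1,0]$, $\mathbf p_3=[0,1,0,0,0]$, $\mathbf p_4=[0,0,1,0,0]$. A point of $HC_F(\mathbf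 v,d)$ is singular if the Jacobian matrix of the three defining polynomials $w_0w_3-w_1w_2$, $x_1^2+w_0w_3$, $A(\mathbf w)x_1+C(\mathbf w)$ has rank less than $3$ there. *)

(* Defs.v *)
From HB Require Import structures.
From mathcomp Require Import all_boot all_order all_algebra.
From mathcomp Require Import reals.
From mathcomp Require Import complex.
From mathcomp Require Import mpoly.
Set Implicit Arguments. Unset Strict Implicit. Unset Printing Implicit Defensive.
Import Order.TTheory GRing.Theory Num.Theory.
Local Open Scope ring_scope.

(* Homogeneous coordinates on CP^4 are indexed by 'I_5:
   index 0 = w0, 1 = w1, 2 = w2, 3 = w3, 4 = x1. *)
Section HCF.
Variable R : realType.
Local Notation C := R[i].
Implicit Types (x y : 'I_5 -> C).

Definition nonzero_pt x := exists k : 'I_5, x k != 0.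
Definition proj_eq x y := exists c : C, c != 0 /\ forall k, x k = c * y k.

Variables v11 v12 v21 v22 d : C.

Definition a1 : C := v11 - v21 - d.
Definition a2 : C := - v11 - v21 + d.
Definition a3 : C := v11 + v21 + d.
Definition a4 : C := - v11 + v21 - d.

Definition XX (k : nat) : {mpoly C[5]} := 'X_(inord k).

Definition FY1 : {mpoly C[5]} := XX 0 * XX 3 - XX 1 * XX 2.
Definition FY2 : {mpoly C[5]} := XX 4 ^+ 2 + XX 0 * XX 3.
Definition Apoly : {mpoly C[5]} :=
  2%:R *: (v22 *: (XX 3 - XX 0) - v12 *: (XX 2 - XX 1)).
Definition Cpoly : {mpoly C[5]} :=
  a1 *: (XX 0 * XX 1) + a2 *: (XX 0 * XX 2) + a3 *: (XX 1 * XX 3)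
  + a4 *: (XX 2 * XX 3).
Definition FH : {mpoly C[5]} := Apoly * XX 4 + Cpoly.

Definition HCpolys (j : nat) : {mpoly C[5]} :=
  match j with 0 => FY1 | 1 => FY2 | _ => FH end.

Definition in_HCF x :=
  nonzero_pt x /\ FY1.@[x] = 0 /\ FY2.@[x] = 0 /\ FH.@[x] = 0.

Definition jacobian x : 'M[C]_(3, 5) :=
  \matrix_(j < 3, k < 5) (mderiv k (HCpolys j)).@[x].

Definition singular_pt x := in_HCF x /\ (\rank (jacobian x) < 3)%N.

End HCF.

Definition on_l1 {C : ringType} (x : 'I_5 -> C) :=
  x (inord 2) = 0 /\ x (inord 3) = 0 /\ x (inord 4) = 0.
Definition on_l2 {C : ringType} (x : 'I_5 -> C) :=
  x (inord 1) = 0 /\ x (inord 3) = 0 /\ x (inord 4) = 0.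
Definition on_l3 {C : ringType} (x : 'I_5 -> C) :=
  x (inord 0) = 0 /\ x (inord 1) = 0 /\ x (inord 4) = 0.
Definition on_l4 {C : ringType} (x : 'I_5 -> C) :=
  x (inord 0) = 0 /\ x (inord 2) = 0 /\ x (inord 4) = 0.
Definition on_lines {C : ringType} (x : 'I_5 -> C) :=
  on_l1 x \/ on_l2 x \/ on_l3 x \/ on_l4 x.

Definition ept {C : ringType} (k : nat) : 'I_5 -> C := fun i => (val i == k)%:R.
Definition p1 {C : ringType} : 'I_5 -> C := ept 0.
Definition p2 {C : ringType} : 'I_5 -> C := ept 3.
Definition p3 {C : ringType} : 'I_5 -> C := ept 1.
Definition p4 {C : ringType} : 'I_5 -> C := ept 2.

(* Main.v *)
Require Import Defs.
From HB Require Import structures.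
From mathcomp Require Import all_boot all_order all_algebra.
From mathcomp Require Import reals complex mpoly.
From mathcomp Require Import ring.
Import GRing.Theory Num.Theory.
Set Implicit Arguments. Unset Strict Implicit.
Local Open Scope ring_scope.

Section S.
Variable R : realType.
Local Notation C := R[i].
Implicit Types x : 'I_5 -> C.

Lemma evXX x k : (XX R k).@[x] = x (inord k).
Proof. by rewrite /XX mevalXU. Qed.

Lemma dXX x (k : 'I_5) j : (j < 5)%N -> (mderiv k (XX R j)).@[x] = if nat_of_ord k == j then 1 else 0.
Proof.
move=> hj; rewrite /XX mderivX mevalZ mnm1E.
case: eqP => [<-|ne].
  have -> : (U_((inord j : 'I_5)) - U_(inord j) = 0)%MM.
    by apply/mnmP => i; rewrite mnmBE subnn mnm0E.
  by rewrite mpolyX0 meval1 mulr1 inordK // eqxx mulr1n.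
case: eqP => [hk|_]; last by rewrite mulr0n mul0r.
by exfalso; apply: ne; rewrite -hk inord_val.
Qed.

Variables v11 v12 v21 v22 d : C.
Local Notation w x j := (x (inord j)).

Lemma evFY1 x : (FY1 R).@[x] = w x 0 * w x 3 - w x 1 * w x 2.
Proof. by rewrite /FY1 mevalB !mevalM !evXX. Qed.
Lemma evFY2 x : (FY2 R).@[x] = w x 4 ^+ 2 + w x 0 * w x 3.
Proof. by rewrite /FY2 mevalD mevalM !mevalM !evXX. Qed.

Lemma evFH x : (FH v11 v12 v21 v22 d).@[x] =
  2%:R * (v22 * (w x 3 - w x 0) - v12 * (w x 2 - w x 1)) * w x 4
  + (a1 v11 v21 d * (w x 0 * w x 1) + a2 v11 v21 d * (w x 0 * w x 2)
     + a3 v11 v21 d * (w x 1 * w x 3) + a4 v11 v21 d * (w x 2 * w x 3)).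
Proof.
by rewrite /FH /Apoly /Cpoly !(mevalD, mevalB, mevalN, mevalM, mevalZ) !evXX.
Qed.

Lemma dFY1 x (k : 'I_5) : (mderiv k (FY1 R)).@[x] =
  (if nat_of_ord k == 0 then 1 else 0) * w x 3 + w x 0 * (if nat_of_ord k == 3 then 1 else 0)
  - ((if nat_of_ord k == 1 then 1 else 0) * w x 2 + w x 1 * (if nat_of_ord k == 2 then 1 else 0)).
Proof.
rewrite /FY1 mderivB !mderivM !(mevalD, mevalB, mevalN, mevalM) !evXX !dXX //.
Qed.

Lemma dFY2 x (k : 'I_5) : (mderiv k (FY2 R)).@[x] =
  (if nat_of_ord k == 4 then 1 else 0) * w x 4 + w x 4 * (if nat_of_ord k == 4 then 1 else 0)
  + ((if nat_of_ord k == 0 then 1 else 0) * w x 3 + w x 0 * (if nat_of_ord k == 3 then 1 else 0)).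
Proof.
rewrite /FY2 expr2 mderivD !mderivM !(mevalD, mevalB, mevalN, mevalM) !evXX !dXX //.
Qed.

Lemma ept_val (k m : nat) : (m < 5)%N -> ept k (inord m : 'I_5) = (if m == k then 1 else 0 : C).
Proof.
move=> hm; rewrite /ept; have -> : val (inord m : 'I_5) = m by exact: inordK.
by case: (m == k).
Qed.

Lemma nz_cases x : nonzero_pt x -> exists2 j, (j < 5)%N & x (inord j) != 0.
Proof. by case=> k hk; exists (nat_of_ord k) => //; rewrite inord_val. Qed.

Lemma proj_basis x j : (j < 5)%N -> x (inord j) != 0 ->
  (forall m, (m < 5)%N -> m != j -> x (inord m) = 0) -> proj_eq x (ept j).
Proof.
move=> hj hx H; exists (x (inord j)); split => // k; rewrite /ept.
case: (eqVneq (val k) j) => e.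
  rewrite mulr1n mulr1; congr x; apply: val_inj; rewrite e; exact/esym/inordK.
rewrite mulr0n mulr0 -(inord_val k); apply: H => //.
Qed.

Lemma proj_vals x j : proj_eq x (ept j) ->
  exists2 c : C, c != 0 & forall m, (m < 5)%N -> x (inord m) = if m == j then c else 0.
Proof.
case=> c [hc H]; exists c => // m hm; rewrite H /ept.
have -> : val (inord m : 'I_5) = m by exact: inordK.
by case: (m == j); rewrite ?mulr1 ?mulr0.
Qed.

Lemma rank_lt3 (M : 'M[C]_(3,5)) (u : 'rV_3) : u != 0 -> u *m M = 0 -> (\rank M < 3)%N.
Proof.
move=> hu hM; rewrite ltn_neqAle rank_leq_row andbT.
apply/negP => hf.
have := mulmx_free_eq0 u hf; rewrite hM eqxx => /esym/eqP.
by apply/eqP.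
Qed.

End S.

Theorem lemma5p8 (R : realType) (v11 v12 v21 v22 d : R[i]) :
  [|| v11 != 0, v12 != 0, v21 != 0, v22 != 0 | d != 0] ->
  a1 v11 v21 d != 0 -> a2 v11 v21 d != 0 ->
  a3 v11 v21 d != 0 -> a4 v11 v21 d != 0 ->
  (* HC_F(v,d) ∩ (l1 ∪ l2 ∪ l3 ∪ l4) = {p1,p2,p3,p4} as subsets of CP^4 *)
  ((forall x : 'I_5 -> R[i],
      in_HCF v11 v12 v21 v22 d x /\ on_lines x <->
      [\/ proj_eq x p1, proj_eq x p2, proj_eq x p3 | proj_eq x p4])
  (* and p1..p4 are singular points of HC_F(v,d) *)
  /\ (singular_pt v11 v12 v21 v22 d p1 /\ singular_pt v11 v12 v21 v22 d p2 /\
      singular_pt v11 v12 v21 v22 d p3 /\ singular_pt v11 v12 v21 v22 d p4)).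
Proof.
move=> _ h1 h2 h3 h4.
have inH : forall x : 'I_5 -> R[i], forall j, (j < 5)%N -> proj_eq x (ept j) ->
    (j == 0 \/ j == 1 \/ j == 2 \/ j == 3)%N -> in_HCF v11 v12 v21 v22 d x.
  move=> x j hj hp hj'; have [c hc Hv] := proj_vals hp.
  split; first by exists (inord j); rewrite Hv // eqxx.
  rewrite evFY1 evFY2 evFH !Hv //.
  by case: hj' => [/eqP->|[/eqP->|[/eqP->|/eqP->]]] /=; (split; [ring|split; ring]).
have onl : forall x : 'I_5 -> R[i], forall j, (j < 5)%N -> proj_eq x (ept j) ->
    (j == 0 \/ j == 1 \/ j == 2 \/ j == 3)%N -> on_lines x.
  move=> x j hj hp hj'; have [c hc Hv] := proj_vals hp.
  rewrite /on_lines /on_l1 /on_l2 /on_l3 /on_l4 !Hv //.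
  case: hj' => [/eqP->|[/eqP->|[/eqP->|/eqP->]]] /=; tauto.
split.
  move=> x; split.
    case=> -[nz [_ [_ hF]]] hl; have [j hj hx] := nz_cases nz.
    move: hF; rewrite evFH.
    case: hl => [[e2 [e3 e4]]|[[e1 [e3 e4]]|[[e0 [e1 e4]]|[e0 [e2 e4]]]]].
    - rewrite e2 e3 e4 => hF.
      have : a1 v11 v21 d * (x (inord 0) * x (inord 1)) = 0.
        by rewrite -hF; ring.
      move/eqP; rewrite mulf_eq0 (negbTE h1) /= mulf_eq0 => /orP[] /eqP e.
      + have e1 : j = 1%N.
          by move: hx; case: j hj => [|[|[|[|[|j]]]]] //; rewrite ?e ?e2 ?e3 ?e4 eqxx.
        subst j; apply: Or43; apply: proj_basis => // m hm hne.
        by case: m hm hne => [|[|[|[|[|m]]]]].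
      + have e1 : j = 0%N.
          by move: hx; case: j hj => [|[|[|[|[|j]]]]] //; rewrite ?e ?e2 ?e3 ?e4 eqxx.
        subst j; apply: Or41; apply: proj_basis => // m hm hne.
        by case: m hm hne => [|[|[|[|[|m]]]]].
    - rewrite e1 e3 e4 => hF.
      have : a2 v11 v21 d * (x (inord 0) * x (inord 2)) = 0.
        by rewrite -hF; ring.
      move/eqP; rewrite mulf_eq0 (negbTE h2) /= mulf_eq0 => /orP[] /eqP e.
      + have e5 : j = 2%N.
          by move: hx; case: j hj => [|[|[|[|[|j]]]]] //; rewrite ?e ?e1 ?e3 ?e4 eqxx.
        subst j; apply: Or44; apply: proj_basis => // m hm hne.
        by case: m hm hne => [|[|[|[|[|m]]]]].
      + have e5 : j = 0%N.
          by move: hx; case: j hj => [|[|[|[|[|j]]]]] //; rewrite ?e ?e1 ?e3 ?e4 eqxx.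
        subst j; apply: Or41; apply: proj_basis => // m hm hne.
        by case: m hm hne => [|[|[|[|[|m]]]]].
    - rewrite e0 e1 e4 => hF.
      have : a4 v11 v21 d * (x (inord 2) * x (inord 3)) = 0.
        by rewrite -hF; ring.
      move/eqP; rewrite mulf_eq0 (negbTE h4) /= mulf_eq0 => /orP[] /eqP e.
      + have e5 : j = 3%N.
          by move: hx; case: j hj => [|[|[|[|[|j]]]]] //; rewrite ?e ?e0 ?e1 ?e4 eqxx.
        subst j; apply: Or42; apply: proj_basis => // m hm hne.
        by case: m hm hne => [|[|[|[|[|m]]]]].
      + have e5 : j = 2%N.
          by move: hx; case: j hj => [|[|[|[|[|j]]]]] //; rewrite ?e ?e0 ?e1 ?e4 eqxx.
        subst j; apply: Or44; apply: proj_basis => // m hm hne.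
        by case: m hm hne => [|[|[|[|[|m]]]]].
    - rewrite e0 e2 e4 => hF.
      have : a3 v11 v21 d * (x (inord 1) * x (inord 3)) = 0.
        by rewrite -hF; ring.
      move/eqP; rewrite mulf_eq0 (negbTE h3) /= mulf_eq0 => /orP[] /eqP e.
      + have e5 : j = 3%N.
          by move: hx; case: j hj => [|[|[|[|[|j]]]]] //; rewrite ?e ?e0 ?e2 ?e4 eqxx.
        subst j; apply: Or42; apply: proj_basis => // m hm hne.
        by case: m hm hne => [|[|[|[|[|m]]]]].
      + have e5 : j = 1%N.
          by move: hx; case: j hj => [|[|[|[|[|j]]]]] //; rewrite ?e ?e0 ?e2 ?e4 eqxx.
        subst j; apply: Or43; apply: proj_basis => // m hm hne.
        by case: m hm hne => [|[|[|[|[|m]]]]].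
  case=> hp; split.
  - by apply: (inH x 0%N) => //; left.
  - by apply: (onl x 0%N) => //; left.
  - by apply: (inH x 3%N) => //; right; right; right.
  - by apply: (onl x 3%N) => //; right; right; right.
  - by apply: (inH x 1%N) => //; right; left.
  - by apply: (onl x 1%N) => //; right; left.
  - by apply: (inH x 2%N) => //; right; right; left.
  - by apply: (onl x 2%N) => //; right; right; left.
have pe : forall j, (j < 5)%N -> proj_eq (ept j : 'I_5 -> R[i]) (ept j).
  by move=> j _; exists 1; split; [exact: oner_neq0| move=> k; rewrite mul1r].
have sing1 : forall j, (j == 0 \/ j == 3)%N ->
    singular_pt v11 v12 v21 v22 d (ept j).
  move=> j hj; have hj5 : (j < 5)%N by case: hj => /eqP->.
  split; first by apply: (inH _ j) => //; [exact: pe | tauto].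
  apply: (rank_lt3 (u := delta_mx 0 0 - delta_mx 0 1)).
    apply/eqP => /matrixP/(_ 0 0); rewrite !mxE /=.
    by move/eqP; rewrite subr0 oner_eq0.
  rewrite mulmxBl -!rowE; apply/eqP; rewrite subr_eq0; apply/eqP.
  apply/rowP => k; rewrite !mxE /= dFY1 dFY2 !ept_val //.
  by case: hj => /eqP->; case: k => [[|[|[|[|[|m]]]]] Hm] //=; ring.
have sing2 : forall j, (j == 1 \/ j == 2)%N ->
    singular_pt v11 v12 v21 v22 d (ept j).
  move=> j hj; have hj5 : (j < 5)%N by case: hj => /eqP->.
  split; first by apply: (inH _ j) => //; [exact: pe | tauto].
  apply: (rank_lt3 (u := delta_mx 0 1)).
    apply/eqP => /matrixP/(_ 0 1); rewrite !mxE /=.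
    by move/eqP; rewrite oner_eq0.
  rewrite -rowE; apply/rowP => k; rewrite !mxE /= dFY2 !ept_val //.
  by case: hj => /eqP->; case: k => [[|[|[|[|[|m]]]]] Hm] //=; ring.
split; first by apply: sing1; left.
split; first by apply: sing1; right.
split; first by apply: sing2; left.
by apply: sing2; right.
Qed.
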